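(* Let $\alpha,\beta$ be real constants with $\alpha+2\beta=1$ and $\beta\le 2/3$, and let $A,B>0$. There exist constants $C_1>0$ and $c>0$ (depending only on $\alpha,\beta,A,B$) such that the following holds. Let $m,n$ be positive integers with $m\le n^2/C_1$ and $n\le m^2/C_1$, and let $P$ be a finite set of points and $L$ a finite set of lines in $\mathbb{R}^2$ with $|L|\le A\,m^{\alpha}n^{\beta}$ and $|I(P,L)|\ge B\,m^{\alpha-\frac13}n^{\beta+\frac23}$. Then $|P|\ge c\,m^{\frac12\alpha-\frac12}n^{\frac12\beta+1}$.
   Context: $I(P,L)$ denotes the set of incidences between $P$ and $L$, i.e. pairs $(p,\ell)\in P\times L$ with $p\in\ell$. *)

(* Defs.v *)
From Stdlib Require Import Reals List.
Import ListNotations.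
Open Scope R_scope.

Definition point := (R * R)%type.

(* Lines in R^2, each represented uniquely:
   NonVert a b is the line y = a x + b; Vert c is the line x = c. *)
Inductive line : Type :=
| NonVert (a b : R)
| Vert (c : R).

Definition on_line (p : point) (l : line) : Prop :=
  match l with
  | NonVert a b => snd p = a * fst p + b
  | Vert c => fst p = c
  end.

Definition on_lineb (p : point) (l : line) : bool :=
  match l with
  | NonVert a b => if Req_EM_T (snd p) (a * fst p + b) then true else false
  | Vert c => if Req_EM_T (fst p) c then true else false
  end.

Lemma on_lineP p l : on_lineb p l = true <-> on_line p l.
Proof.
  destruct l; simpl; destruct Req_EM_T; split; congruence.
Qed.

(* |I(P,L)|: number of pairs (p,l) in P x L with p on l
   (P, L given as duplicate-free lists, i.e. finite sets). *)
Definition incidences (P : list point) (L : list line) : nat :=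
  length (filter (fun pl => on_lineb (fst pl) (snd pl)) (list_prod P L)).

(* Main.v *)
Require Import Defs.
From Stdlib Require Import Reals List Lia Lra ClassicalEpsilon Classical ZArith.
Import ListNotations.
Open Scope R_scope.

Open Scope R_scope.

Definition dec (P : Prop) : bool :=
  if excluded_middle_informative P then true else false.

Lemma decP (P : Prop) : dec P = true <-> P.
Proof. unfold dec; destruct excluded_middle_informative; split; congruence. Qed.

Lemma decF (P : Prop) : dec P = false <-> ~ P.
Proof. unfold dec; destruct excluded_middle_informative; split; congruence. Qed.

Lemma inj_count {A B : Type} (l1 : list A) (l2 : list B) (Rl : A -> B -> Prop) :
  NoDup l1 ->
  (forall a, In a l1 -> exists b, In b l2 /\ Rl a b) ->
  (forall a a' b, In a l1 -> In a' l1 -> Rl a b -> Rl a' b -> a = a') ->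
  (length l1 <= length l2)%nat.
Proof.
  intros Hnd Hex Hinj.
  assert (H : exists l3, length l3 = length l1 /\ NoDup l3 /\ incl l3 l2 /\
             forall b, In b l3 -> exists a, In a l1 /\ Rl a b).
  { clear - Hnd Hex Hinj. induction l1 as [|a l1 IH].
    - exists []. repeat split; auto. constructor. intros x []. intros b [].
    - inversion Hnd; subst.
      destruct IH as [l3 [G1 [G2 [G3 G4]]]]; auto.
      + intros a0 Ha0; apply Hex; simpl; auto.
      + intros a0 a1 b Ha0 Ha1; apply Hinj; simpl; auto.
      + destruct (Hex a (or_introl eq_refl)) as [b [Hb Rb]].
        exists (b :: l3). rename G4 into H4. repeat split.
        * simpl; auto.
        * constructor; auto. intro Hin. destruct (H4 b Hin) as [a' [Ha' Ra']].
          assert (a = a') by (apply (Hinj a a' b); simpl; auto). subst; contradiction.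
        * intros x [<-|Hx]; auto.
        * intros b0 [<-|Hb0]. exists a; simpl; auto.
          destruct (H4 b0 Hb0) as [a' [? ?]]; exists a'; simpl; auto. }
  destruct H as [l3 [H1 [H2 [H3 _]]]]. rewrite <- H1. apply NoDup_incl_length; auto.
Qed.

Lemma NoDup_prod {A B : Type} (l1 : list A) (l2 : list B) :
  NoDup l1 -> NoDup l2 -> NoDup (list_prod l1 l2).
Proof.
  induction 1 as [|a l1 Ha Hnd IH]; intros H2; simpl. constructor.
  apply NoDup_app; auto.
  - apply NoDup_map_NoDup_ForallPairs; auto. intros x y _ _ H; now inversion H.
  - intros [x y] Hin1 Hin2. apply in_map_iff in Hin1. destruct Hin1 as [z [Hz _]].
    inversion Hz; subst. apply in_prod_iff in Hin2. tauto.
Qed.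

Lemma filter_split {A : Type} (f : A -> bool) (l : list A) :
  length l = (length (filter f l) + length (filter (fun x => negb (f x)) l))%nat.
Proof. induction l; simpl; auto. destruct (f a); simpl; lia. Qed.

Lemma max_exists {A : Type} (key : A -> R) (l : list A) :
  l <> [] -> exists x, In x l /\ forall y, In y l -> key y <= key x.
Proof.
  induction l as [|a l IH]; intros H. congruence.
  destruct l as [|b l'].
  - exists a; split; simpl; auto. intros y [<-|[]]; lra.
  - destruct IH as [x [Hx Hm]]. discriminate.
    destruct (Rle_dec (key a) (key x)).
    + exists x; split. simpl; auto. intros y [<-|Hy]; auto.
    + exists a; split. simpl; auto. intros y [<-|Hy]. lra. specialize (Hm y Hy); lra.
Qed.

Lemma filter_incl_length {A : Type} (f g : A -> bool) (l : list A) :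
  (forall x, In x l -> f x = true -> g x = true) ->
  (length (filter f l) <= length (filter g l))%nat.
Proof.
  induction l; simpl; intros H; auto.
  destruct (f a) eqn:E; [rewrite (H a); simpl; auto|]; [|destruct (g a); simpl]; 
  try (apply le_n_S || apply le_S); apply IHl; intros; apply H; auto.
Qed.

Lemma decT (P : Prop) : dec P = true -> P.
Proof. apply decP. Qed.
Lemma Tdec (P : Prop) : P -> dec P = true.
Proof. apply decP. Qed.

Open Scope R_scope.

Record edge := mkE { es : R; et : R; ex1 : R; ex2 : R }.
Definition ev (e : edge) (x : R) := es e * x + et e.
Definition lv (e : edge) : point := (ex1 e, ev e (ex1 e)).
Definition rv (e : edge) : point := (ex2 e, ev e (ex2 e)).
Definition onE (e : edge) (z : point) := ex1 e <= fst z <= ex2 e /\ snd z = ev e (fst z).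
Definition inE (e : edge) (z : point) := ex1 e < fst z < ex2 e /\ snd z = ev e (fst z).

Record Good (V : list point) (Es : list edge) : Prop := {
  gV : NoDup V; gE : NoDup Es;
  gx : forall e, In e Es -> ex1 e < ex2 e;
  glv : forall e, In e Es -> In (lv e) V;
  grv : forall e, In e Es -> In (rv e) V;
  gint : forall e w, In e Es -> In w V -> ~ inE e w }.

Definition cross (e f : edge) :=
  NoDup [lv e; rv e; lv f; rv f] /\ exists z, onE e z /\ onE f z.
Definition NoCross (Es : list edge) := forall e f, In e Es -> In f Es -> ~ cross e f.

Lemma edge_eq (e f : edge) : es e = es f -> et e = et f -> ex1 e = ex1 f -> ex2 e = ex2 f -> e = f.
Proof. destruct e, f; simpl; intros; subst; auto. Qed.

Lemma sameline V Es e f z : Good V Es -> In e Es -> In f Es ->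
  es e = es f -> et e = et f -> inE e z -> inE f z -> e = f.
Proof.
  intros G He Hf Hs Ht [Hz1 Hz2] [Hz3 Hz4].
  assert (Hv: forall g h, In g Es -> In h Es -> es g = es h -> et g = et h -> ex1 g < ex1 h -> ex1 h < ex2 g -> False).
  { intros g h Hg Hh Hs' Ht' H1 H2. apply (gint _ _ G g (lv h) Hg (glv _ _ G h Hh)).
    unfold inE, lv, ev; simpl; split; [lra|]. rewrite Hs', Ht'; auto. }
  assert (Hv2: forall g h, In g Es -> In h Es -> es g = es h -> et g = et h -> ex1 g < ex2 h -> ex2 h < ex2 g -> False).
  { intros g h Hg Hh Hs' Ht' H1 H2. apply (gint _ _ G g (rv h) Hg (grv _ _ G h Hh)).
    unfold inE, rv, ev; simpl; split; [lra|]. rewrite Hs', Ht'; auto. }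
  apply edge_eq; auto.
  - destruct (Rtotal_order (ex1 e) (ex1 f)) as [H|[H|H]]; auto.
    + exfalso; apply (Hv e f); auto; lra.
    + exfalso; apply (Hv f e); auto; lra.
  - destruct (Rtotal_order (ex2 e) (ex2 f)) as [H|[H|H]]; auto.
    + exfalso; apply (Hv2 f e); auto; lra.
    + exfalso; apply (Hv2 e f); auto; lra.
Qed.

Lemma two_pts_line (e f : edge) x1 x2 : x1 <> x2 -> ev e x1 = ev f x1 -> ev e x2 = ev f x2 ->
  es e = es f /\ et e = et f.
Proof.
  unfold ev; intros Hx H1 H2.
  assert (Hs : es e = es f).
  { assert ((es e - es f) * (x1 - x2) = 0) by lra.
    apply Rmult_integral in H; destruct H; lra. }
  split; auto. rewrite Hs in H1; lra.
Qed.

Lemma lemC V Es e f z : Good V Es -> NoCross Es -> In e Es -> In f Es ->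
  inE e z -> inE f z -> e = f.
Proof.
  intros G NC He Hf Hze Hzf.
  pose proof (gx _ _ G e He) as Ge. pose proof (gx _ _ G f Hf) as Gf.
  destruct (classic (NoDup [lv e; rv e; lv f; rv f])) as [Hnd|Hnd].
  - exfalso. apply (NC e f He Hf). split; auto. exists z.
    destruct Hze, Hzf; unfold onE; repeat split; auto; lra.
  - assert (Hsh : exists w, (w = lv e \/ w = rv e) /\ (w = lv f \/ w = rv f)).
    { apply NNPP; intro Hn. apply Hnd.
      assert (lv e <> rv e) by (unfold lv, rv; intro HH; inversion HH; lra).
      assert (lv f <> rv f) by (unfold lv, rv; intro HH; inversion HH; lra).
      repeat constructor; simpl; intros HH; repeat destruct HH as [HH|HH]; auto;
      try (apply Hn; eexists; split; [left; reflexivity| ]; rewrite ?HH; auto; fail);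
      try (apply Hn; eexists; split; [right; reflexivity| ]; rewrite ?HH; auto; fail);
      try (apply Hn; eexists; split; [left; symmetry; exact HH| ]; auto; fail);
      try (apply Hn; eexists; split; [right; symmetry; exact HH| ]; auto; fail);
      congruence. }
    destruct Hsh as [w [Hw1 Hw2]].
    destruct Hze as [Hz1 Hz2], Hzf as [Hz3 Hz4].
    assert (Hw : ev e (fst w) = ev f (fst w) /\ fst w <> fst z).
    { destruct Hw1 as [->| ->]; destruct Hw2 as [Hw2|Hw2]; unfold lv, rv in *; inversion Hw2; simpl;
      split; auto; lra. }
    destruct Hw as [Hw Hwz].
    destruct (two_pts_line e f (fst w) (fst z)) as [Hs Ht]; auto. congruence.
    apply (sameline V Es e f z); auto; split; auto.
Qed.

Open Scope R_scope.

Lemma root_lemma a b p q : p < q -> a * p + b > 0 -> a * q + b <= 0 ->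
  exists x, p < x <= q /\ a * x + b = 0 /\ (a * q + b < 0 -> x < q).
Proof.
  intros Hpq Hp Hq.
  assert (Ha : a < 0) by nra.
  set (d := (a * p + b) / (- a)).
  assert (Hd : d * (- a) = a * p + b) by (unfold d; field; lra).
  exists (p + d). repeat split.
  - nra.
  - nra.
  - nra.
  - intros. nra.
Qed.

Lemma aff_pos a b x0 : a * x0 + b > 0 ->
  exists d, d > 0 /\ forall x, x0 <= x <= x0 + d -> a * x + b > 0.
Proof.
  intros H. destruct (Rle_dec 0 a).
  - exists 1; split; [lra|]. intros x Hx. nra.
  - set (d := (a * x0 + b) / (- a) / 2).
    assert (Hd : d * (- a) = (a * x0 + b) / 2) by (unfold d; field; lra).
    exists d; split. nra. intros x Hx. nra.
Qed.

Lemma common_point (l1 h1 l2 h2 : edge) x0 X1 X2 :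
  x0 < X1 -> x0 < X2 ->
  ev l1 x0 < ev h1 x0 -> ev l1 x0 < ev h2 x0 -> ev l2 x0 < ev h1 x0 -> ev l2 x0 < ev h2 x0 ->
  exists q, x0 < fst q < X1 /\ fst q < X2 /\
    ev l1 (fst q) < snd q < ev h1 (fst q) /\ ev l2 (fst q) < snd q < ev h2 (fst q).
Proof.
  intros HX1 HX2 H11 H12 H21 H22.
  unfold ev in *.
  destruct (aff_pos (es h1 - es l1) (et h1 - et l1) x0) as [d1 [Hd1 P1]]; [lra|].
  destruct (aff_pos (es h2 - es l1) (et h2 - et l1) x0) as [d2 [Hd2 P2]]; [lra|].
  destruct (aff_pos (es h1 - es l2) (et h1 - et l2) x0) as [d3 [Hd3 P3]]; [lra|].
  destruct (aff_pos (es h2 - es l2) (et h2 - et l2) x0) as [d4 [Hd4 P4]]; [lra|].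
  set (d := Rmin (Rmin (Rmin d1 d2) (Rmin d3 d4)) (Rmin ((X1 - x0)/2) ((X2 - x0)/2))).
  assert (Hd : 0 < d /\ d <= d1 /\ d <= d2 /\ d <= d3 /\ d <= d4 /\ d <= (X1-x0)/2 /\ d <= (X2-x0)/2).
  { unfold d; repeat (unfold Rmin; destruct Rle_dec); repeat split; lra. }
  set (x := x0 + d).
  specialize (P1 x); specialize (P2 x); specialize (P3 x); specialize (P4 x).
  set (lo := Rmax (es l1 * x + et l1) (es l2 * x + et l2)).
  set (hi := Rmin (es h1 * x + et h1) (es h2 * x + et h2)).
  exists (x, (lo + hi) / 2); simpl.
  assert (Hlo : es l1 * x + et l1 <= lo /\ es l2 * x + et l2 <= lo /\
                (lo = es l1 * x + et l1 \/ lo = es l2 * x + et l2)).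
  { unfold lo, Rmax; destruct Rle_dec; lra. }
  assert (Hhi : hi <= es h1 * x + et h1 /\ hi <= es h2 * x + et h2 /\
                (hi = es h1 * x + et h1 \/ hi = es h2 * x + et h2)).
  { unfold hi, Rmin; destruct Rle_dec; lra. }
  unfold x in *.
  assert (A1 := P1 ltac:(lra)). assert (A2 := P2 ltac:(lra)).
  assert (A3 := P3 ltac:(lra)). assert (A4 := P4 ltac:(lra)).
  assert (lo < hi) by (destruct Hlo as [? [? [E1|E1]]], Hhi as [? [? [E2|E2]]]; rewrite E1, E2; nra).
  repeat split; lra.
Qed.

Open Scope R_scope.

Definition topof (Es : list edge) (e e' : edge) :=
  In e' Es /\ rv e' = rv e /\ es e' < es e /\
  forall g, In g Es -> rv g = rv e -> es g < es e -> es g <= es e'.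
Definition inW (V : list point) (e e' : edge) (w : point) :=
  In w V /\ ex1 e <= fst w /\ ex1 e' <= fst w /\ fst w < ex2 e /\
  ev e (fst w) <= snd w <= ev e' (fst w).
Definition maxW V e e' u := inW V e e' u /\ forall w, inW V e e' w -> fst w <= fst u.
Definition typ (e e' : edge) (u : point) (k : nat) :=
  (k = 0%nat /\ snd u = ev e' (fst u)) \/ (k = 1%nat /\ snd u = ev e (fst u)) \/
  (k = 2%nat /\ ev e (fst u) < snd u < ev e' (fst u)).
Definition Rel V Es (e : edge) (uk : point * nat) :=
  exists e', topof Es e e' /\ maxW V e e' (fst uk) /\ typ e e' (fst uk) (snd uk).
Definition Tz (e e' : edge) (u q : point) :=
  fst u < fst q < ex2 e /\ ev e (fst q) < snd q < ev e' (fst q).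

Lemma rv_eq e f : rv e = rv f -> ex2 e = ex2 f /\ ev e (ex2 e) = ev f (ex2 e).
Proof. unfold rv; intros H; inversion H; split; auto. Qed.

Lemma top_above Es e e' x : topof Es e e' -> x < ex2 e -> ev e x < ev e' x.
Proof.
  intros [_ [Hr [Hs _]]] Hx. apply rv_eq in Hr. destruct Hr as [H1 H2].
  rewrite H1 in H2. unfold ev in *. nra.
Qed.

Lemma emptiness V Es e e' u g z : Good V Es -> NoCross Es -> In e Es ->
  topof Es e e' -> maxW V e e' u -> In g Es -> onE g z -> Tz e e' u z -> False.
Proof.
  intros G NC He Ht [[HuV [Hu1 [Hu2 [Hu3 Hu4]]]] Hmax] Hg [Hz1 Hz2] [HT1 HT2].
  pose proof Ht as [He' [Hr [Hs Hmx]]].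
  pose proof (rv_eq _ _ Hr) as [Hx2 Hy2].
  rewrite Hz2 in HT2.
  assert (Gg := gx _ _ G g Hg).
  assert (Ge := gx _ _ G e He).
  destruct (Rlt_le_dec (ex2 g) (ex2 e)) as [Hlt|Hge].
  - destruct (Rle_dec (ev e' (ex2 g)) (ev g (ex2 g))) as [Hc1|Hc1].
    + destruct (root_lemma (es e' - es g) (et e' - et g) (fst z) (ex2 g)) as [x' [Hx' [Hr0 _]]].
      * destruct (Req_dec (fst z) (ex2 g)) as [E|E]; [rewrite <- E in Hc1; lra|lra].
      * unfold ev in *; lra.
      * unfold ev in *; lra.
      * destruct (Rlt_le_dec x' (ex2 g)) as [Hl|Hl].
        -- assert (g = e').
           { apply (lemC V Es g e' (x', ev g x')); auto; unfold inE; simpl; repeat split; try lra.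
             unfold ev in *; lra. }
           subst g. unfold ev in *; lra.
        -- apply (gint _ _ G e' (rv g) He' (grv _ _ G g Hg)).
           unfold inE, rv; simpl. assert (x' = ex2 g) by lra. subst x'.
           split; [lra|]. unfold ev in *; lra.
    + destruct (Rle_dec (ev g (ex2 g)) (ev e (ex2 g))) as [Hc2|Hc2].
      * destruct (root_lemma (es g - es e) (et g - et e) (fst z) (ex2 g)) as [x' [Hx' [Hr0 _]]].
        -- destruct (Req_dec (fst z) (ex2 g)) as [E|E]; [rewrite <- E in Hc2; lra|lra].
        -- unfold ev in *; lra.
        -- unfold ev in *; lra.
        -- destruct (Rlt_le_dec x' (ex2 g)) as [Hl|Hl].
           ++ assert (g = e).
              { apply (lemC V Es g e (x', ev g x')); auto; unfold inE; simpl; repeat split; try lra.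
                unfold ev in *; lra. }
              subst g. unfold ev in *; lra.
           ++ apply (gint _ _ G e (rv g) He (grv _ _ G g Hg)).
              unfold inE, rv; simpl. assert (x' = ex2 g) by lra. subst x'.
              split; [lra|]. unfold ev in *; lra.
      * assert (fst (rv g) <= fst u).
        { apply Hmax. unfold inW, rv; simpl. repeat split; try lra. apply (grv _ _ G g Hg). }
        unfold rv in H; simpl in H. lra.
  - assert (Hyv : ev e' (ex2 e) = ev e (ex2 e)) by (rewrite Hx2 in Hy2; lra).
    destruct (Rtotal_order (ev g (ex2 e)) (ev e (ex2 e))) as [Hc|[Hc|Hc]].
    + destruct (root_lemma (es g - es e) (et g - et e) (fst z) (ex2 e)) as [x' [Hx' [Hr0 Hst]]].
      * lra.
      * unfold ev in *; lra.
      * unfold ev in *; lra.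
      * assert (x' < (ex2 e)) by (apply Hst; unfold ev in *; lra).
        assert (g = e).
        { apply (lemC V Es g e (x', ev g x')); auto; unfold inE; simpl; repeat split; try lra.
          unfold ev in *; lra. }
        subst g. unfold ev in *; lra.
    + destruct (Rlt_le_dec (ex2 e) (ex2 g)) as [Hl|Hl].
      * apply (gint _ _ G g (rv e) Hg (grv _ _ G e He)).
        unfold inE, rv; simpl. split; [lra|]. lra.
      * assert (Hgx : ex2 g = (ex2 e)) by lra.
        assert (Hrg : rv g = rv e).
        { unfold rv. rewrite Hgx. rewrite Hc. auto. }
        assert (es e' < es g).
        { unfold ev in *. nra. }
        assert (es g < es e).
        { unfold ev in *. nra. }
        specialize (Hmx g Hg Hrg H0). lra.
    + destruct (root_lemma (es e' - es g) (et e' - et g) (fst z) (ex2 e)) as [x' [Hx' [Hr0 Hst]]].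
      * lra.
      * unfold ev in *; lra.
      * unfold ev in *; lra.
      * assert (x' < (ex2 e)) by (apply Hst; unfold ev in *; lra).
        assert (g = e').
        { apply (lemC V Es g e' (x', ev g x')); auto; unfold inE; simpl; repeat split; try lra.
          unfold ev in *; lra. }
        subst g. unfold ev in *; lra.
Qed.

Open Scope R_scope.

Lemma rel_inj V Es e1 e2 uk : Good V Es -> NoCross Es -> In e1 Es -> In e2 Es ->
  Rel V Es e1 uk -> Rel V Es e2 uk -> e1 = e2.
Proof.
  intros G NC H1 H2 [e1' [T1 [M1 Y1]]] [e2' [T2 [M2 Y2]]].
  destruct uk as [u k]; simpl in *.
  set (x0 := fst u).
  assert (Hx1 : x0 < ex2 e1) by (destruct M1 as [[? [? [? [? ?]]]] _]; auto).
  assert (Hx2 : x0 < ex2 e2) by (destruct M2 as [[? [? [? [? ?]]]] _]; auto).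
  pose proof (top_above _ _ _ _ T1 Hx1) as A1.
  pose proof (top_above _ _ _ _ T2 Hx2) as A2.
  assert (C : ev e1 x0 < ev e2' x0 /\ ev e2 x0 < ev e1' x0).
  { unfold typ in Y1, Y2. fold x0 in Y1, Y2.
    destruct Y1 as [[-> Y1]|[[-> Y1]|[-> Y1]]]; destruct Y2 as [[E Y2]|[[E Y2]|[E Y2]]];
    try discriminate; lra. }
  destruct (common_point e1 e1' e2 e2' x0 (ex2 e1) (ex2 e2)) as [q [Q1 [Q2 [Q3 Q4]]]]; try lra.
  assert (Hu1 : ex1 e1 <= x0) by (destruct M1 as [[? [? [? [? ?]]]] _]; auto).
  assert (Hu2 : ex1 e2 <= x0) by (destruct M2 as [[? [? [? [? ?]]]] _]; auto).
  destruct (Rtotal_order (ev e1 (fst q)) (ev e2 (fst q))) as [C1|[C1|C1]].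
  - exfalso. apply (emptiness V Es e1 e1' u e2 (fst q, ev e2 (fst q))); auto.
    + unfold onE; simpl; split; [lra|auto].
    + unfold Tz; simpl; fold x0; repeat split; lra.
  - apply (lemC V Es e1 e2 (fst q, ev e1 (fst q))); auto; unfold inE; simpl; repeat split; lra.
  - exfalso. apply (emptiness V Es e2 e2' u e1 (fst q, ev e1 (fst q))); auto.
    + unfold onE; simpl; split; [lra|auto].
    + unfold Tz; simpl; fold x0; repeat split; lra.
Qed.

Definition ismin (Es : list edge) (e : edge) :=
  forall g, In g Es -> rv g = rv e -> es e <= es g.

Lemma rel_ex V Es e : Good V Es -> In e Es -> ~ ismin Es e ->
  exists uk, In uk (list_prod V [0%nat; 1%nat; 2%nat]) /\ Rel V Es e uk.
Proof.
  intros G He Hn.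
  assert (Hg : exists g, In g Es /\ rv g = rv e /\ es g < es e).
  { apply NNPP; intro Hc; apply Hn. intros g Hg Hr. apply Rnot_lt_le. intro. apply Hc; eauto. }
  set (l := filter (fun g => dec (rv g = rv e /\ es g < es e)) Es).
  destruct (max_exists es l) as [e' [He' Hm]].
  { destruct Hg as [g [? ?]]. intro E. assert (In g l).
    { unfold l; apply filter_In; split; auto; apply Tdec; auto. }
    rewrite E in H1; auto. }
  unfold l in He', Hm. apply filter_In in He'. destruct He' as [He' Hc]. apply decT in Hc.
  assert (T : topof Es e e').
  { unfold topof. refine (conj He' (conj (proj1 Hc) (conj (proj2 Hc) _))). intros g Hg1 Hg2 Hg3. apply Hm. apply filter_In; split; auto. apply Tdec; auto. }
  assert (Ge := gx _ _ G e He). assert (Ge' := gx _ _ G e' He').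
  assert (Hx2 : ex2 e' = ex2 e) by (apply (rv_eq e' e); tauto).
  set (lw := filter (fun w => dec (inW V e e' w)) V).
  destruct (max_exists fst lw) as [u [Hu Hum]].
  { assert (exists w, inW V e e' w) as [w Hw].
    { destruct (Rle_dec (ex1 e') (ex1 e)).
      - exists (lv e). unfold inW, lv; simpl. repeat split; try lra. apply (glv _ _ G e He).
        pose proof (top_above _ _ _ (ex1 e) T Ge). lra.
      - exists (lv e'). unfold inW, lv; simpl. repeat split; try lra. apply (glv _ _ G e' He').
        pose proof (top_above _ _ _ (ex1 e') T ltac:(lra)). lra. }
    intro E. assert (In w lw) by (unfold lw; apply filter_In; split; [apply Hw|apply Tdec; auto]).
    rewrite E in H; auto. }
  unfold lw in Hu, Hum. apply filter_In in Hu. destruct Hu as [HuV Hu]. apply decT in Hu.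
  assert (M : maxW V e e' u).
  { split; auto. intros w Hw. apply Hum. apply filter_In; split; [apply Hw|apply Tdec; auto]. }
  destruct Hu as [_ [_ [_ [_ [Hu1 Hu2]]]]].
  destruct (Req_dec (snd u) (ev e' (fst u))).
  - exists (u, 0%nat); split. apply in_prod; simpl; auto. exists e'; split; auto; split; auto. left; auto.
  - destruct (Req_dec (snd u) (ev e (fst u))).
    + exists (u, 1%nat); split. apply in_prod; simpl; auto. exists e'; split; auto; split; auto. right; left; auto.
    + exists (u, 2%nat); split. apply in_prod; simpl; auto. exists e'; split; auto; split; auto.
      right; right; split; auto; simpl; lra.
Qed.

Lemma min_inj V Es e f : Good V Es -> In e Es -> In f Es -> ismin Es e -> ismin Es f ->
  rv e = rv f -> e = f.
Proof.
  intros G He Hf Me Mf Hr.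
  assert (Hs : es e = es f) by (specialize (Me f Hf (eq_sym Hr)); specialize (Mf e He Hr); lra).
  destruct (rv_eq e f Hr) as [Hx Hy].
  assert (Ht : et e = et f) by (unfold ev in Hy; rewrite Hs in Hy; lra).
  assert (Ge := gx _ _ G e He). assert (Gf := gx _ _ G f Hf).
  set (a := Rmax (ex1 e) (ex1 f)).
  assert (ex1 e <= a /\ ex1 f <= a /\ (a = ex1 e \/ a = ex1 f)) by (unfold a, Rmax; destruct Rle_dec; lra).
  apply (sameline V Es e f ((a + ex2 e)/2, ev e ((a + ex2 e)/2))); auto;
    unfold inE; simpl; repeat split; try lra.
  unfold ev; rewrite Hs, Ht; auto.
Qed.

Lemma planar V Es : Good V Es -> NoCross Es -> (length Es <= 4 * length V)%nat.
Proof.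
  intros G NC.
  rewrite (filter_split (fun e => dec (ismin Es e)) Es).
  assert (A : (length (filter (fun e => dec (ismin Es e)) Es) <= length V)%nat).
  { apply (inj_count _ _ (fun e v => v = rv e)).
    - apply NoDup_filter, (gE _ _ G).
    - intros a Ha. apply filter_In in Ha. exists (rv a); split; auto. apply (grv _ _ G); tauto.
    - intros a a' b Ha Ha' -> E. apply filter_In in Ha, Ha'.
      destruct Ha as [Ha Ma], Ha' as [Ha' Ma']. apply decT in Ma, Ma'.
      apply (min_inj V Es); auto. }
  assert (B : (length (filter (fun e => negb (dec (ismin Es e))) Es) <= length (list_prod V [0%nat;1%nat;2%nat]))%nat).
  { apply (inj_count _ _ (Rel V Es)).
    - apply NoDup_filter, (gE _ _ G).
    - intros a Ha. apply filter_In in Ha. destruct Ha as [Ha Ma].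
      apply (rel_ex V Es a G Ha). intro Hm. apply Tdec in Hm. rewrite Hm in Ma; discriminate.
    - intros a a' b Ha Ha'. apply filter_In in Ha, Ha'. apply (rel_inj V Es); tauto. }
  rewrite length_prod in B. simpl in B. lia.
Qed.

Open Scope R_scope.

Definition cr (Es : list edge) : nat :=
  length (filter (fun p => dec (cross (fst p) (snd p))) (list_prod Es Es)).

Lemma good_sub V Es Es' : Good V Es -> NoDup Es' -> (forall x, In x Es' -> In x Es) -> Good V Es'.
Proof.
  intros G N I. constructor; auto.
  - apply (gV _ _ G).
  - intros; apply (gx _ _ G); auto.
  - intros; apply (glv _ _ G); auto.
  - intros; apply (grv _ _ G); auto.
  - intros; apply (gint _ _ G); auto.
Qed.

Lemma base_aux n : forall V Es, (length Es <= n)%nat -> Good V Es ->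
  (length Es <= 4 * length V + cr Es)%nat.
Proof.
  induction n as [|n IH]; intros V Es Hl G.
  - destruct Es; simpl in *; lia.
  - destruct (classic (NoCross Es)) as [NC|NC].
    + pose proof (planar V Es G NC); lia.
    + assert (exists e f, In e Es /\ In f Es /\ cross e f) as [e [f [He [Hf C]]]].
      { apply NNPP; intro Hn; apply NC. intros e f He Hf C; apply Hn; eauto. }
      set (Es' := filter (fun g => negb (dec (g = e))) Es).
      assert (Hsp : length Es = (length (filter (fun g => dec (g = e)) Es) + length Es')%nat)
        by apply filter_split.
      assert (K1 : (1 <= length (filter (fun g => dec (g = e)) Es))%nat).
      { destruct (filter (fun g => dec (g = e)) Es) eqn:E; simpl; try lia.
        assert (In e (filter (fun g => dec (g = e)) Es)) by (apply filter_In; split; auto; apply Tdec; auto).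
        rewrite E in H; destruct H. }
      assert (K2 : (length (filter (fun g => dec (g = e)) Es) <= 1)%nat).
      { change 1%nat with (length [e]). apply NoDup_incl_length.
        apply NoDup_filter, (gE _ _ G). intros x Hx. apply filter_In in Hx. destruct Hx as [_ Hx].
        apply decT in Hx. subst; simpl; auto. }
      assert (HEs' : forall x, In x Es' -> In x Es /\ x <> e).
      { intros x Hx. apply filter_In in Hx. destruct Hx as [Hx Hx']. split; auto.
        intro; subst. rewrite (Tdec (e = e) eq_refl) in Hx'; discriminate. }
      assert (G' : Good V Es').
      { apply (good_sub V Es); auto. apply NoDup_filter, (gE _ _ G). intros x Hx; apply HEs'; auto. }
      assert (IH' := IH V Es' ltac:(lia) G').
      assert (Hcr : (S (cr Es') <= cr Es)%nat).
      { unfold cr. change (S (length (filter (fun p => dec (cross (fst p) (snd p))) (list_prod Es' Es'))))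
          with (length ((e, f) :: filter (fun p => dec (cross (fst p) (snd p))) (list_prod Es' Es'))).
        apply NoDup_incl_length.
        - constructor.
          + intro Hin. apply filter_In in Hin. destruct Hin as [Hin _]. apply in_prod_iff in Hin.
            destruct Hin as [Hin _]. apply HEs' in Hin. tauto.
          + apply NoDup_filter, NoDup_prod; apply G'.
        - intros [x y] [Hxy|Hxy].
          + inversion Hxy; subst. apply filter_In; split. apply in_prod; auto. apply Tdec; auto.
          + apply filter_In in Hxy. destruct Hxy as [Hxy Hc]. apply filter_In; split; auto.
            apply in_prod_iff in Hxy. apply in_prod; apply HEs'; tauto. }
      lia.
Qed.

Lemma base V Es : Good V Es -> (length Es <= 4 * length V + cr Es)%nat.
Proof. intros G. apply (base_aux (length Es)); auto. Qed.

Open Scope nat_scope. Open Scope bool_scope.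

Lemma list_sum_add {A} (f g : A -> nat) l :
  list_sum (map (fun x => f x + g x) l) = list_sum (map f l) + list_sum (map g l).
Proof. induction l; simpl; auto; lia. Qed.

Lemma list_sum_le {A} (f g : A -> nat) l : (forall x, In x l -> f x <= g x) ->
  list_sum (map f l) <= list_sum (map g l).
Proof. induction l; simpl; auto; intros H. pose proof (H a (or_introl eq_refl)).
  assert (list_sum (map f l) <= list_sum (map g l)) by (apply IHl; intros; apply H; simpl; auto). lia. Qed.

Lemma list_sum_ext {A} (f g : A -> nat) l : (forall x, In x l -> f x = g x) ->
  list_sum (map f l) = list_sum (map g l).
Proof. induction l as [|a l IH]; simpl; intros H; [auto|]. rewrite IH by (intros; apply H; simpl; auto). rewrite (H a) by (simpl; auto). reflexivity. Qed.

Lemma list_sum_const {A} k (l : list A) : list_sum (map (fun _ => k) l) = k * length l.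
Proof. induction l; simpl; auto; lia. Qed.

Lemma list_sum_if {A} (f : A -> bool) k l :
  list_sum (map (fun x => if f x then k else 0) l) = k * length (filter f l).
Proof. induction l; simpl; auto. destruct (f a); simpl; lia. Qed.

Lemma list_sum_mul {A} (f : A -> nat) k l :
  list_sum (map (fun x => k * f x) l) = k * list_sum (map f l).
Proof. induction l; simpl; auto; lia. Qed.

Lemma filter_ext_in' {A} (f g : A -> bool) l : (forall x, In x l -> f x = g x) ->
  filter f l = filter g l.
Proof. induction l; simpl; auto; intros H. rewrite (H a), IHl; auto; intros; apply H; simpl; auto. Qed.

Lemma length_filter_flat_map {A B} (P : B -> bool) (F : A -> list B) l :
  length (filter P (flat_map F l)) = list_sum (map (fun x => length (filter P (F x))) l).
Proof. induction l; simpl; auto. rewrite filter_app, length_app, IHl; auto. Qed.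

Lemma swap_sum {A B} (f : A -> B -> bool) la lb :
  list_sum (map (fun a => length (filter (fun b => f a b) lb)) la) =
  list_sum (map (fun b => length (filter (fun a => f a b) la)) lb).
Proof.
  induction la as [|a la IH]; simpl.
  - rewrite list_sum_const; lia.
  - rewrite IH.
    rewrite (list_sum_ext (fun b => length (if f a b then a :: filter (fun a0 => f a0 b) la else filter (fun a0 => f a0 b) la))
             (fun b => (if f a b then 1 else 0) + length (filter (fun a0 => f a0 b) la))).
    + rewrite list_sum_add, list_sum_if. rewrite Nat.mul_1_l. reflexivity.
    + intros b _. destruct (f a b); simpl; lia.
Qed.

Lemma colsum {A} (m : nat) (g : A -> nat) (Q : A -> bool) l :
  (forall x, In x l -> Q x = true -> g x < m) ->
  list_sum (map (fun j => length (filter (fun x => Q x && Nat.eqb (g x) j) l)) (seq 0 m)) =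
  length (filter Q l).
Proof.
  induction l as [|a l IH]; intros H; simpl.
  - rewrite list_sum_const; lia.
  - rewrite (list_sum_ext _ (fun j => (if Q a && Nat.eqb (g a) j then 1 else 0) +
        length (filter (fun x => Q x && Nat.eqb (g x) j) l))).
    + rewrite list_sum_add, list_sum_if, IH by (intros; apply H; simpl; auto).
      destruct (Q a) eqn:Eq; simpl.
      * assert (Hg : g a < m) by (apply H; simpl; auto).
        assert (length (filter (fun j => Nat.eqb (g a) j) (seq 0 m)) = 1).
        { apply Nat.le_antisymm.
          - change 1 with (length [g a]). apply NoDup_incl_length.
            apply NoDup_filter, seq_NoDup. intros x Hx. apply filter_In in Hx.
            destruct Hx as [_ Hx]. apply Nat.eqb_eq in Hx. subst; simpl; auto.
          - destruct (filter (fun j => Nat.eqb (g a) j) (seq 0 m)) eqn:E; simpl; try lia.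
            assert (In (g a) (filter (fun j => Nat.eqb (g a) j) (seq 0 m))).
            { apply filter_In; split. apply in_seq; lia. apply Nat.eqb_refl. }
            rewrite E in H0; destruct H0. }
        lia.
      * idtac.
        assert (forall l0 : list nat, filter (fun _ => false) l0 = []) by (induction l0; auto).
        rewrite H0; simpl; lia.
    + intros j _. destruct (Q a && Nat.eqb (g a) j); simpl; lia.
Qed.

Lemma map_pair_filter {A B} (a : A -> bool) (b : B -> bool) x l2 :
  filter (fun p => a (fst p) && b (snd p)) (map (fun y => (x, y)) l2) =
  if a x then map (fun y => (x, y)) (filter b l2) else [].
Proof.
  induction l2 as [|y l2 IH2]; simpl. destruct (a x); auto.
  destruct (a x) eqn:Ex; simpl; auto. destruct (b y); simpl; rewrite IH2; auto.
Qed.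

Lemma prod_filter {A B} (a : A -> bool) (b : B -> bool) l1 l2 :
  list_prod (filter a l1) (filter b l2) = filter (fun p => a (fst p) && b (snd p)) (list_prod l1 l2).
Proof.
  induction l1 as [|x l1 IH]; simpl; auto.
  rewrite filter_app, map_pair_filter, <- IH. destruct (a x); simpl; auto.
Qed.

Open Scope nat_scope. Open Scope bool_scope.

Definition upd (c : point -> nat) (v : point) (j : nat) : point -> nat :=
  fun p => if dec (p = v) then j else c p.
Fixpoint cols (m : nat) (V : list point) : list (point -> nat) :=
  match V with
  | [] => [fun _ => 0]
  | v :: V' => flat_map (fun c => map (upd c v) (seq 0 m)) (cols m V')
  end.
Definition monoP (c : point -> nat) (S : list point) := forall x y, In x S -> In y S -> c x = c y.
Definition mono c S : bool := dec (monoP c S).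

Lemma dec_iff (P Q : Prop) : (P <-> Q) -> dec P = dec Q.
Proof. intros H. destruct (dec Q) eqn:E. apply Tdec, H, decT, E. apply decF. apply decF in E. tauto. Qed.

Lemma filter_false {A} (f : A -> bool) l : (forall x, In x l -> f x = false) -> filter f l = [].
Proof. induction l; simpl; auto; intros H. rewrite H by (simpl; auto). apply IHl; intros; apply H; simpl; auto. Qed.

Lemma filter_true {A} (f : A -> bool) l : (forall x, In x l -> f x = true) -> filter f l = l.
Proof. induction l; simpl; auto; intros H. rewrite H by (simpl; auto). f_equal; apply IHl; intros; apply H; simpl; auto. Qed.

Lemma count_one {A} (l : list A) x : NoDup l -> In x l -> length (filter (fun y => dec (y = x)) l) = 1.
Proof.
  intros N I. apply Nat.le_antisymm.
  - change 1 with (length [x]). apply NoDup_incl_length. apply NoDup_filter; auto.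
    intros y Hy. apply filter_In in Hy. destruct Hy as [_ Hy]. apply decT in Hy. subst; simpl; auto.
  - destruct (filter (fun y => dec (y = x)) l) eqn:E; simpl; try lia.
    assert (In x (filter (fun y => dec (y = x)) l)) by (apply filter_In; split; auto; apply Tdec; auto).
    rewrite E in H; destruct H.
Qed.

Lemma length_filter_map {A B} (P : B -> bool) (f : A -> B) l :
  length (filter P (map f l)) = length (filter (fun x => P (f x)) l).
Proof. induction l; simpl; auto. destruct (P (f a)); simpl; auto. Qed.

Lemma cols_len m V : length (cols m V) = m ^ length V.
Proof.
  induction V; simpl; auto. rewrite (flat_map_constant_length (c := m)).
  rewrite IHV; lia. intros; rewrite length_map, length_seq; auto.
Qed.

Lemma cols_range m V c : In c (cols m V) -> forall v, In v V -> c v < m.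
Proof.
  revert c; induction V as [|v0 V IH]; simpl; intros c Hc v Hv. destruct Hv.
  apply in_flat_map in Hc. destruct Hc as [c' [Hc' Hm]]. apply in_map_iff in Hm.
  destruct Hm as [j [<- Hj]]. apply in_seq in Hj. unfold upd.
  destruct (dec (v = v0)) eqn:E. lia. apply decF in E. destruct Hv as [Hv|Hv]. congruence.
  apply (IH c'); auto.
Qed.

Lemma seq_pick (Q : Prop) a m : a < m ->
  length (filter (fun j => dec (Q /\ j = a)) (seq 0 m)) = if dec Q then 1 else 0.
Proof.
  intros Ha. destruct (dec Q) eqn:EQ.
  - apply decT in EQ. rewrite (filter_ext_in' _ (fun j => dec (j = a))).
    apply count_one. apply seq_NoDup. apply in_seq; lia.
    intros; apply dec_iff; tauto.
  - apply decF in EQ. rewrite filter_false; auto. intros; apply decF; tauto.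
Qed.

Lemma cols_count m V : forall Ss, NoDup V -> NoDup Ss -> Ss <> [] -> incl Ss V ->
  length (filter (fun c => mono c Ss) (cols m V)) = m ^ (length V - length Ss + 1).
Proof.
  induction V as [|v V' IH]; intros Ss NV NS HS IS.
  - destruct Ss as [|s Ss]. congruence. destruct (IS s); simpl; auto.
  - inversion NV as [|? ? Hv NV']; subst.
    simpl cols. rewrite length_filter_flat_map.
    destruct (classic (In v Ss)) as [Hin|Hin].
    + set (S' := filter (fun x => negb (dec (x = v))) Ss).
      assert (HlS : length Ss = length S' + 1).
      { rewrite (filter_split (fun x => dec (x = v)) Ss). rewrite count_one; auto. unfold S'; lia. }
      assert (HS' : forall y, In y S' <-> In y Ss /\ y <> v).
      { intros y; unfold S'; rewrite filter_In. split; intros [H1 H2]; split; auto.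
        - intro E; subst. rewrite (Tdec (v = v) eq_refl) in H2; discriminate.
        - destruct (dec (y = v)) eqn:E; auto. apply decT in E; contradiction. }
      assert (IS' : incl S' V').
      { intros y Hy. apply HS' in Hy. destruct Hy as [Hy Hy']. destruct (IS y Hy); auto. congruence. }
      destruct S' as [|s0 S0] eqn:ES'.
      * rewrite (list_sum_ext _ (fun _ => m)).
        { rewrite list_sum_const, cols_len. simpl in HlS. rewrite HlS. simpl.
          rewrite Nat.sub_0_r, Nat.add_1_r; simpl; lia. }
        intros c _. rewrite length_filter_map, filter_true. apply length_seq.
        intros j _. apply Tdec. intros x y Hx Hy.
        assert (x = v) by (apply NNPP; intro; apply (proj2 (HS' x)); auto).
        assert (y = v) by (apply NNPP; intro; apply (proj2 (HS' y)); auto).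
        subst; auto.
      * assert (Hs0 : In s0 Ss /\ s0 <> v) by (apply HS'; simpl; auto).
        rewrite (list_sum_ext _ (fun c => if mono c S' then 1 else 0)).
        { rewrite list_sum_if, Nat.mul_1_l, ES', IH; auto.
          - f_equal. rewrite HlS. cbn [length]. lia.
          - rewrite <- ES'. unfold S'. apply NoDup_filter; auto.
          - congruence. }
        intros c Hc. rewrite length_filter_map.
        rewrite (filter_ext_in' _ (fun j => dec (monoP c S' /\ j = c s0))).
        { rewrite seq_pick. auto. apply (cols_range m V' c Hc). apply IS'. simpl; auto. }
        intros j _. unfold mono. apply dec_iff. split.
        -- intros Hm. split.
           ++ intros x y Hx Hy. rewrite ES' in Hx, Hy. apply HS' in Hx, Hy.
              pose proof (Hm x y (proj1 Hx) (proj1 Hy)) as E. unfold upd in E.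
              rewrite (proj2 (decF (x = v)) (proj2 Hx)), (proj2 (decF (y = v)) (proj2 Hy)) in E. auto.
           ++ pose proof (Hm v s0 Hin (proj1 Hs0)) as E. unfold upd in E.
              rewrite (Tdec (v = v) eq_refl), (proj2 (decF (s0 = v)) (proj2 Hs0)) in E. auto.
        -- intros [Hm ->] x y Hx Hy.
           assert (Hxx : upd c v (c s0) x = c s0).
           { unfold upd. destruct (dec (x = v)) eqn:E; auto. apply decF in E.
             apply Hm; rewrite ES'; [apply HS'; auto | simpl; auto]. }
           assert (Hyy : upd c v (c s0) y = c s0).
           { unfold upd. destruct (dec (y = v)) eqn:E; auto. apply decF in E.
             apply Hm; rewrite ES'; [apply HS'; auto | simpl; auto]. }
           congruence.
    + assert (IS' : incl Ss V').
      { intros y Hy. destruct (IS y Hy); auto. subst; contradiction. }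
      assert (Hle : length Ss <= length V') by (apply NoDup_incl_length; auto).
      rewrite (list_sum_ext _ (fun c => if mono c Ss then m else 0)).
      { rewrite list_sum_if, IH; auto. cbn [length].
        replace (S (length V') - length Ss + 1) with (S (length V' - length Ss + 1)) by lia.
        simpl; lia. }
      intros c _. rewrite length_filter_map.
      assert (E : forall j, mono (upd c v j) Ss = mono c Ss).
      { intros j. unfold mono. apply dec_iff.
        assert (forall x, In x Ss -> upd c v j x = c x).
        { intros x Hx. unfold upd. destruct (dec (x = v)) eqn:E; auto. apply decT in E; subst; contradiction. }
        unfold monoP; split; intros Hm x y Hx Hy.
        - rewrite <- (H x Hx), <- (H y Hy); auto.
        - rewrite (H x Hx), (H y Hy); auto. }
      destruct (mono c Ss) eqn:Em.
      * rewrite filter_true. apply length_seq. intros; rewrite E; auto.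
      * rewrite filter_false; auto.
Qed.

Open Scope nat_scope. Open Scope bool_scope.

Lemma mono2 c x y : mono c [x; y] = Nat.eqb (c x) (c y).
Proof.
  unfold mono. destruct (Nat.eqb_spec (c x) (c y)).
  - apply Tdec. intros a b Ha Hb. simpl in Ha, Hb.
    destruct Ha as [<-|[<-|[]]]; destruct Hb as [<-|[<-|[]]]; auto.
  - apply decF. intros H. apply n, H; simpl; auto.
Qed.

Lemma mono4 c a b d e : mono c [a; b; d; e] =
  Nat.eqb (c a) (c b) && Nat.eqb (c a) (c d) && Nat.eqb (c a) (c e).
Proof.
  unfold mono. destruct (Nat.eqb_spec (c a) (c b)), (Nat.eqb_spec (c a) (c d)), (Nat.eqb_spec (c a) (c e)); simpl.
  1: { apply Tdec. intros x y Hx Hy. simpl in Hx, Hy.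
    destruct Hx as [<-|[<-|[<-|[<-|[]]]]]; destruct Hy as [<-|[<-|[<-|[<-|[]]]]]; congruence. }
  all: apply decF; intros H; 
    try (apply n; apply H; simpl; auto; fail);
    try (apply n0; apply H; simpl; auto; fail);
    try (apply n1; apply H; simpl; auto; fail).
Qed.

Lemma filter_filter' {A} (f g : A -> bool) l : filter f (filter g l) = filter (fun x => g x && f x) l.
Proof. induction l; simpl; auto. destruct (g a); simpl; auto. destruct (f a); simpl; rewrite IHl; auto. Qed.

Definition crossb (p : edge * edge) := dec (cross (fst p) (snd p)).
Definition S4 (p : edge * edge) := [lv (fst p); rv (fst p); lv (snd p); rv (snd p)].

Lemma per_col V Es m c : Good V Es -> In c (cols m V) ->
  length (filter (fun e => mono c [lv e; rv e]) Es) <=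
  4 * length V + length (filter (fun p => crossb p && mono c (S4 p)) (list_prod Es Es)).
Proof.
  intros G Hc.
  set (Vj := fun j => filter (fun v => true && Nat.eqb (c v) j) V).
  set (Ej := fun j => filter (fun e => mono c [lv e; rv e] && Nat.eqb (c (lv e)) j) Es).
  assert (B : forall j, length (Ej j) <= 4 * length (Vj j) + cr (Ej j)).
  { intros j. apply base. constructor.
    - apply NoDup_filter, G.
    - apply NoDup_filter, G.
    - intros e He; apply filter_In in He; apply (gx _ _ G); tauto.
    - intros e He; apply filter_In in He; apply filter_In; split. apply (glv _ _ G); tauto.
      destruct He as [_ He]. apply andb_prop in He. destruct He; auto.
    - intros e He; apply filter_In in He; apply filter_In; split. apply (grv _ _ G); tauto.
      destruct He as [_ He]. apply andb_prop in He. destruct He as [H1 H2]. rewrite mono2 in H1.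
      apply Nat.eqb_eq in H1, H2. simpl. apply Nat.eqb_eq. congruence.
    - intros e w He Hw. apply filter_In in He, Hw. apply (gint _ _ G); tauto. }
  assert (S1 : list_sum (map (fun j => length (Ej j)) (seq 0 m)) =
               length (filter (fun e => mono c [lv e; rv e]) Es)).
  { apply (colsum m (fun e => c (lv e))). intros e He _. apply (cols_range m V c Hc). apply (glv _ _ G); auto. }
  assert (S2 : list_sum (map (fun j => length (Vj j)) (seq 0 m)) = length V).
  { unfold Vj. rewrite (colsum m c (fun _ => true)). rewrite filter_true; auto.
    intros v Hv _. apply (cols_range m V c Hc); auto. }
  assert (S3 : list_sum (map (fun j => cr (Ej j)) (seq 0 m)) =
               length (filter (fun p => crossb p && mono c (S4 p)) (list_prod Es Es))).
  { rewrite <- (colsum m (fun p => c (lv (fst p))) (fun p => crossb p && mono c (S4 p))).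
    - apply list_sum_ext. intros j _. unfold cr, Ej. rewrite prod_filter, filter_filter'.
      f_equal. apply filter_ext_in'. intros [e f] _. unfold crossb, S4. simpl.
      rewrite !mono2, mono4.
      destruct (dec (cross e f)); simpl;
      destruct (Nat.eqb_spec (c (lv e)) (c (rv e))), (Nat.eqb_spec (c (lv e)) j),
               (Nat.eqb_spec (c (lv f)) (c (rv f))), (Nat.eqb_spec (c (lv f)) j),
               (Nat.eqb_spec (c (lv e)) (c (lv f))), (Nat.eqb_spec (c (lv e)) (c (rv f))); simpl;
      auto; try lia.
    - intros [e f] Hp _. apply in_prod_iff in Hp. apply (cols_range m V c Hc). apply (glv _ _ G); tauto. }
  rewrite <- S1, <- S3, <- S2.
  rewrite <- list_sum_mul, <- list_sum_add. apply list_sum_le. intros j _. apply B.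
Qed.

Open Scope nat_scope. Open Scope bool_scope.

Lemma lv_rv_neq V Es e : Good V Es -> In e Es -> lv e <> rv e.
Proof. intros G He H. pose proof (gx _ _ G e He). unfold lv, rv in H. inversion H. lra. Qed.

Lemma amp_sum V Es m : Good V Es -> 1 <= m ->
  length Es * m ^ (length V - 1) <= 4 * length V * m ^ length V + cr Es * m ^ (length V - 3).
Proof.
  intros G Hm.
  set (n := length V).
  set (cl := cols m V).
  assert (A : list_sum (map (fun c => length (filter (fun e => mono c [lv e; rv e]) Es)) cl) <=
              list_sum (map (fun c => 4 * n + length (filter (fun p => crossb p && mono c (S4 p)) (list_prod Es Es))) cl)).
  { apply list_sum_le. intros c Hc. apply (per_col V Es m c G Hc). }
  rewrite list_sum_add, list_sum_const in A.
  rewrite (swap_sum (fun c e => mono c [lv e; rv e])) in A.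
  rewrite (swap_sum (fun c p => crossb p && mono c (S4 p))) in A.
  rewrite (list_sum_ext _ (fun _ => m ^ (n - 1))) in A.
  2: { intros e He. unfold cl. rewrite cols_count; auto.
       - f_equal. assert (2 <= n).
         { change 2 with (length [lv e; rv e]). apply NoDup_incl_length.
           constructor. intros [H|[]]. apply (lv_rv_neq V Es e G He); auto. constructor; auto. constructor.
           intros x [<-|[<-|[]]]. apply (glv _ _ G e He). apply (grv _ _ G e He). }
         cbn [length]. fold n. lia.
       - apply G.
       - constructor. intros [H|[]]. apply (lv_rv_neq V Es e G He); auto. constructor; auto. constructor.
       - discriminate.
       - intros x [<-|[<-|[]]]. apply (glv _ _ G e He). apply (grv _ _ G e He). }
  rewrite (list_sum_ext _ (fun p => if crossb p then m ^ (n - 3) else 0)) in A.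
  2: { intros [e f] Hp. apply in_prod_iff in Hp. destruct Hp as [He Hf].
       destruct (crossb (e, f)) eqn:Ec; simpl.
       - unfold cl. rewrite cols_count; auto.
         + f_equal. unfold crossb in Ec. apply decT in Ec. destruct Ec as [Nd _].
           assert (4 <= n).
           { change 4 with (length [lv e; rv e; lv f; rv f]). apply NoDup_incl_length; auto.
             intros x [<-|[<-|[<-|[<-|[]]]]]; [apply (glv _ _ G)|apply (grv _ _ G)|apply (glv _ _ G)|apply (grv _ _ G)]; auto. }
           simpl. fold n. lia.
         + apply G.
         + unfold crossb in Ec. apply decT in Ec. apply Ec.
         + discriminate.
         + intros x [<-|[<-|[<-|[<-|[]]]]]; simpl;
             [apply (glv _ _ G)|apply (grv _ _ G)|apply (glv _ _ G)|apply (grv _ _ G)]; auto.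
       - apply length_zero_iff_nil. apply filter_false; auto. }
  rewrite !list_sum_const, list_sum_if in A. unfold cl in A. rewrite cols_len in A.
  fold n in A. unfold cr. fold crossb. 
  lia.
Qed.

Lemma amp V Es m : Good V Es -> 1 <= m -> length Es * m ^ 2 <= 4 * length V * m ^ 3 + cr Es.
Proof.
  intros G Hm.
  destruct (cr Es) eqn:Ec.
  - pose proof (base V Es G) as B. rewrite Ec in B.
    assert (m ^ 2 <= m ^ 3) by (apply Nat.pow_le_mono_r; lia). nia.
  - assert (Hn : 4 <= length V).
    { unfold cr in Ec. destruct (filter (fun p => dec (cross (fst p) (snd p))) (list_prod Es Es)) as [|[e f] l] eqn:EF.
      discriminate.
      assert (In (e, f) (filter (fun p => dec (cross (fst p) (snd p))) (list_prod Es Es))) by (rewrite EF; simpl; auto).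
      apply filter_In in H. destruct H as [Hp Hc]. apply in_prod_iff in Hp. apply decT in Hc. simpl in Hc.
      destruct Hc as [Nd _]. change 4 with (length [lv e; rv e; lv f; rv f]). apply NoDup_incl_length; auto.
      intros x [<-|[<-|[<-|[<-|[]]]]]; [apply (glv _ _ G)|apply (grv _ _ G)|apply (glv _ _ G)|apply (grv _ _ G)]; tauto. }
    pose proof (amp_sum V Es m G Hm) as A. rewrite Ec in A.
    set (k := length V - 3) in A.
    assert (E1 : length V - 1 = k + 2) by (unfold k; lia).
    assert (E2 : length V = k + 3) by (unfold k; lia).
    rewrite E1 in A. rewrite E2 in A at 2. rewrite !Nat.pow_add_r in A.
    assert (Hp : 0 < m ^ k) by (apply Nat.neq_0_lt_0, Nat.pow_nonzero; lia).
    apply (Nat.mul_le_mono_pos_l _ _ (m ^ k)); auto.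
    replace (m ^ k * (length Es * m ^ 2)) with (length Es * (m ^ k * m ^ 2)) by ring.
    replace (m ^ k * (4 * length V * m ^ 3 + S n)) with (4 * length V * (m ^ k * m ^ 3) + S n * m ^ k) by ring.
    exact A.
Qed.

Open Scope R_scope.

Lemma cross_interior V Es e f : Good V Es -> In e Es -> In f Es -> cross e f ->
  exists z, inE e z /\ inE f z.
Proof.
  intros G He Hf [Nd [z [[Hz1 Hz2] [Hz3 Hz4]]]].
  assert (Nd' : lv e <> lv f /\ lv e <> rv f /\ rv e <> lv f /\ rv e <> rv f).
  { inversion Nd as [|? ? N1 N2]; subst. inversion N2 as [|? ? N3 N4]; subst.
    inversion N4 as [|? ? N5 _]; subst. simpl in *. intuition. }
  assert (Hpt : forall g, In g Es -> onE g z -> fst z = ex1 g -> z = lv g).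
  { intros g Hg [_ Hy] Hx. unfold lv. destruct z; simpl in *. subst. f_equal; auto. }
  assert (Hpt2 : forall g, In g Es -> onE g z -> fst z = ex2 g -> z = rv g).
  { intros g Hg [_ Hy] Hx. unfold rv. destruct z; simpl in *. subst. f_equal; auto. }
  assert (Oe : onE e z) by (split; auto). assert (Of : onE f z) by (split; auto).
  assert (Hint : forall g h, In g Es -> In h Es -> onE g z -> onE h z -> In z V ->
                 ~ inE h z -> z = lv h \/ z = rv h).
  { intros g h Hg Hh Og Oh HzV Hn. destruct Oh as [[A1 A2] A3].
    destruct (Req_dec (fst z) (ex1 h)). left; apply Hpt; auto; split; auto.
    destruct (Req_dec (fst z) (ex2 h)). right; apply Hpt2; auto; split; auto.
    exfalso; apply Hn; split; auto; lra. }
  exists z; split.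
  - split; auto.
    destruct (Req_dec (fst z) (ex1 e)) as [E|E].
    + exfalso. assert (z = lv e) by (apply Hpt; auto). subst z.
      assert (In (lv e) V) by (apply (glv _ _ G); auto).
      destruct (Hint e f He Hf Oe Of H (gint _ _ G f (lv e) Hf H)); tauto.
    + destruct (Req_dec (fst z) (ex2 e)) as [E2|E2]; [|lra].
      exfalso. assert (z = rv e) by (apply Hpt2; auto). subst z.
      assert (In (rv e) V) by (apply (grv _ _ G); auto).
      destruct (Hint e f He Hf Oe Of H (gint _ _ G f (rv e) Hf H)); tauto.
  - split; auto.
    destruct (Req_dec (fst z) (ex1 f)) as [E|E].
    + exfalso. assert (z = lv f) by (apply Hpt; auto). subst z.
      assert (In (lv f) V) by (apply (glv _ _ G); auto).
      destruct (Hint f e Hf He Of Oe H (gint _ _ G e (lv f) He H)); intuition congruence.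
    + destruct (Req_dec (fst z) (ex2 f)) as [E2|E2]; [|lra].
      exfalso. assert (z = rv f) by (apply Hpt2; auto). subst z.
      assert (In (rv f) V) by (apply (grv _ _ G); auto).
      destruct (Hint f e Hf He Of Oe H (gint _ _ G e (rv f) He H)); intuition congruence.
Qed.

Lemma cross_inj V Es e f e2 f2 : Good V Es -> In e Es -> In f Es -> In e2 Es -> In f2 Es ->
  cross e f -> cross e2 f2 -> es e = es e2 -> et e = et e2 -> es f = es f2 -> et f = et f2 ->
  e = e2 /\ f = f2.
Proof.
  intros G He Hf He2 Hf2 C1 C2 H1 H2 H3 H4.
  destruct (cross_interior V Es e f G He Hf C1) as [z1 [Z1 Z2]].
  destruct (cross_interior V Es e2 f2 G He2 Hf2 C2) as [z2 [Z3 Z4]].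
  assert (Nef : e <> f).
  { intro; subst. destruct C1 as [Nd _]. inversion Nd; subst. simpl in *. tauto. }
  destruct (Req_dec (fst z1) (fst z2)) as [E|E].
  - assert (z1 = z2).
    { destruct z1 as [x1 y1], z2 as [x2 y2]; simpl in *. destruct Z1 as [_ Y1], Z3 as [_ Y3]. simpl in Y1, Y3. subst x2. rewrite Y1, Y3. unfold ev. rewrite H1, H2; auto. }
    subst z2. split.
    + apply (sameline V Es e e2 z1); auto.
    + apply (sameline V Es f f2 z1); auto.
  - exfalso. apply Nef.
    destruct (two_pts_line e f (fst z1) (fst z2)) as [Hs Ht]; auto.
    + destruct Z1, Z2; congruence.
    + destruct Z3, Z4. unfold ev in *. rewrite H1, H2, H3, H4. congruence.
    + apply (sameline V Es e f z1); auto.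
Qed.

Open Scope R_scope.

Definition isNV (l : line) : bool := match l with NonVert _ _ => true | Vert _ => false end.
Definition consec (P : list point) (t : point * point * line) : Prop :=
  let '(p, q, l) := t in
  on_line p l /\ on_line q l /\ fst p < fst q /\
  forall r, In r P -> on_line r l -> ~ (fst p < fst r < fst q).
Definition mkedge (t : point * point * line) : edge :=
  match t with
  | (p, q, NonVert a b) => mkE a b (fst p) (fst q)
  | (p, q, Vert _) => mkE 0 0 0 0
  end.
Definition Trs P L := filter (fun t => dec (consec P t)) (list_prod (list_prod P P) (filter isNV L)).
Definition EsOf P L := map mkedge (Trs P L).

Lemma in_Trs P L t : In t (Trs P L) ->
  exists p q a b, t = (p, q, NonVert a b) /\ In p P /\ In q P /\ In (NonVert a b) L /\ consec P t.
Proof.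
  unfold Trs; intros H. apply filter_In in H. destruct H as [H C]. apply decT in C.
  destruct t as [[p q] l]. apply in_prod_iff in H. destruct H as [H1 H2].
  apply in_prod_iff in H1. apply filter_In in H2. destruct l as [a b|c]; simpl in H2.
  - exists p, q, a, b. split; [reflexivity|]. split; [tauto|split; [tauto|split; [tauto|exact C]]].
  - destruct H2; discriminate.
Qed.

Lemma pt_eq (p : point) a b : on_line p (NonVert a b) -> p = (fst p, a * fst p + b).
Proof. destruct p; simpl; intros ->; auto. Qed.

Lemma EsOf_good P L : NoDup P -> NoDup L -> Good P (EsOf P L).
Proof.
  intros NP NL. unfold EsOf. constructor; auto.
  - apply NoDup_map_NoDup_ForallPairs.
    + intros t1 t2 H1 H2 E.
      destruct (in_Trs P L t1 H1) as [p [q [a [b [-> [_ [_ [_ [C1 [C2 _]]]]]]]]]].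
      destruct (in_Trs P L t2 H2) as [p' [q' [a' [b' [-> [_ [_ [_ [C1' [C2' _]]]]]]]]]].
      simpl in E. injection E as Ea Eb Ep Eq. subst a' b'.
      rewrite (pt_eq p a b C1), (pt_eq p' a b C1'), (pt_eq q a b C2), (pt_eq q' a b C2'), Ep, Eq.
      reflexivity.
    + apply NoDup_filter, NoDup_prod; [apply NoDup_prod|apply NoDup_filter]; auto.
  - intros e He. apply in_map_iff in He. destruct He as [t [<- Ht]].
    destruct (in_Trs P L t Ht) as [p [q [a [b [-> [_ [_ [_ [C1 [C2 [C3 _]]]]]]]]]]]. simpl; auto.
  - intros e He. apply in_map_iff in He. destruct He as [t [<- Ht]].
    destruct (in_Trs P L t Ht) as [p [q [a [b [-> [Hp [_ [_ [C1 [C2 [C3 _]]]]]]]]]]].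
    unfold lv, ev; simpl. rewrite (pt_eq p a b) in Hp; auto.
  - intros e He. apply in_map_iff in He. destruct He as [t [<- Ht]].
    destruct (in_Trs P L t Ht) as [p [q [a [b [-> [_ [Hq [_ [C1 [C2 [C3 _]]]]]]]]]]].
    unfold rv, ev; simpl. rewrite (pt_eq q a b) in Hq; auto.
  - intros e w He Hw. apply in_map_iff in He. destruct He as [t [<- Ht]].
    destruct (in_Trs P L t Ht) as [p [q [a [b [-> [_ [_ [_ [C1 [C2 [C3 C4]]]]]]]]]]].
    intros [Hx Hy]. simpl in Hx, Hy. apply (C4 w Hw); auto.
    
Qed.

Lemma EsOf_line P L e : In e (EsOf P L) -> In (NonVert (es e) (et e)) (filter isNV L).
Proof.
  unfold EsOf; intros He. apply in_map_iff in He. destruct He as [t [<- Ht]].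
  destruct (in_Trs P L t Ht) as [p [q [a [b [-> [_ [_ [HL _]]]]]]]]. simpl.
  apply filter_In; auto.
Qed.

Lemma cr_bound P L : NoDup P -> NoDup L ->
  (cr (EsOf P L) <= length (filter isNV L) * length (filter isNV L))%nat.
Proof.
  intros NP NL. pose proof (EsOf_good P L NP NL) as G.
  unfold cr. rewrite <- length_prod.
  apply (inj_count _ _ (fun p ll => fst ll = NonVert (es (fst p)) (et (fst p)) /\
                                       snd ll = NonVert (es (snd p)) (et (snd p)))).
  - apply NoDup_filter, NoDup_prod; apply G.
  - intros [e f] H. apply filter_In in H. destruct H as [H _]. apply in_prod_iff in H.
    exists (NonVert (es e) (et e), NonVert (es f) (et f)); split; auto.
    apply in_prod; apply (EsOf_line P L); tauto.
  - intros [e f] [e2 f2] [l1 l2] H1 H2 [E1 E2] [E3 E4]. simpl in *.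
    apply filter_In in H1, H2. destruct H1 as [H1 C1], H2 as [H2 C2].
    apply decT in C1, C2. apply in_prod_iff in H1, H2. simpl in C1, C2.
    rewrite E1 in E3; rewrite E2 in E4. inversion E3; inversion E4.
    destruct (cross_inj P (EsOf P L) e f e2 f2) as [-> ->]; auto; tauto.
Qed.

Open Scope R_scope.

Lemma inc_bound P L : NoDup P -> NoDup L ->
  (incidences P L <= length P + length (filter isNV L) + length (EsOf P L))%nat.
Proof.
  intros NP NL. unfold incidences.
  set (D := filter (fun pl => on_lineb (fst pl) (snd pl)) (list_prod P L)).
  assert (ND : NoDup D) by (apply NoDup_filter, NoDup_prod; auto).
  assert (HD : forall pl, In pl D -> In (fst pl) P /\ In (snd pl) L /\ on_line (fst pl) (snd pl)).
  { intros [p l] H. unfold D in H. apply filter_In in H. destruct H as [H1 H2].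
    apply in_prod_iff in H1. apply on_lineP in H2. simpl; tauto. }
  rewrite (filter_split (fun pl => isNV (snd pl)) D).
  assert (A1 : (length (filter (fun pl => negb (isNV (snd pl))) D) <= length P)%nat).
  { apply (inj_count _ _ (fun pl p => p = fst pl)).
    - apply NoDup_filter; auto.
    - intros pl H. apply filter_In in H. exists (fst pl); split; auto. apply HD; tauto.
    - intros [p l] [p' l'] b H H' E E'. simpl in *. subst.
      apply filter_In in H, H'. destruct H as [H N], H' as [H' N'].
      apply HD in H, H'. simpl in *. destruct l as [a c|c]; [discriminate|].
      destruct l' as [a' c'|c']; [discriminate|]. simpl in H, H'.
      f_equal. f_equal. lra. }
  set (Dn := filter (fun pl => isNV (snd pl)) D).
  assert (NDn : NoDup Dn) by (apply NoDup_filter; auto).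
  assert (HDn : forall pl, In pl Dn -> exists a b, snd pl = NonVert a b /\ In (fst pl) P /\
             In (snd pl) L /\ on_line (fst pl) (snd pl)).
  { intros [p l] H. unfold Dn in H. apply filter_In in H. destruct H as [H N].
    apply HD in H. destruct l as [a b|c]; [|discriminate]. exists a, b; simpl in *; tauto. }
  set (hs := fun pl : point * line => dec (exists q, In q P /\ on_line q (snd pl) /\ fst (fst pl) < fst q)).
  rewrite (filter_split hs Dn).
  assert (A2 : (length (filter hs Dn) <= length (EsOf P L))%nat).
  { apply (inj_count _ _ (fun pl e => lv e = fst pl /\ NonVert (es e) (et e) = snd pl)).
    - apply NoDup_filter; auto.
    - intros [p l] H. apply filter_In in H. destruct H as [H Hh].
      destruct (HDn _ H) as [a [b [El [Hp [Hl Ho]]]]]. simpl in *. subst l.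
      unfold hs in Hh. apply decT in Hh. simpl in Hh.
      set (cand := filter (fun q => dec (on_line q (NonVert a b) /\ fst p < fst q)) P).
      destruct (max_exists (fun q : point => - fst q) cand) as [q [Hq Hqm]].
      { destruct Hh as [q [Hq1 [Hq2 Hq3]]]. intro E.
        assert (In q cand) by (apply filter_In; split; auto; apply Tdec; auto).
        rewrite E in H0; auto. }
      unfold cand in Hq. apply filter_In in Hq. destruct Hq as [HqP Hq]. apply decT in Hq.
      exists (mkedge (p, q, NonVert a b)). split.
      + unfold EsOf. apply in_map. unfold Trs. apply filter_In. split.
        * apply in_prod; [apply in_prod; auto|]. apply filter_In; auto.
        * apply Tdec. simpl. split; auto. split; [tauto|]. split; [tauto|].
          intros r Hr Hro Hlt.
          assert (In r cand) by (apply filter_In; split; auto; apply Tdec; simpl; split; auto; lra).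
          specialize (Hqm r H0). lra.
      + simpl. unfold lv, ev; simpl. split; auto. rewrite (pt_eq p a b Ho) at 3. auto.
    - intros [p l] [p' l'] e H H' [E1 E2] [E3 E4]. simpl in *. congruence. }
  assert (A3 : (length (filter (fun pl => negb (hs pl)) Dn) <= length (filter isNV L))%nat).
  { apply (inj_count _ _ (fun pl l => l = snd pl)).
    - apply NoDup_filter; auto.
    - intros [p l] H. apply filter_In in H. destruct H as [H _].
      destruct (HDn _ H) as [a [b [El [Hp [Hl Ho]]]]]. simpl in *. exists l; split; auto.
      apply filter_In; split; auto. subst; auto.
    - intros [p l] [p' l'] b H H' E E'. simpl in *. subst.
      apply filter_In in H, H'. destruct H as [H N], H' as [H' N'].
      destruct (HDn _ H) as [a [c [El [Hp [Hl Ho]]]]]. destruct (HDn _ H') as [_ [_ [_ [Hp' [_ Ho']]]]].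
      simpl in *. unfold hs in N, N'. simpl in N, N'.
      destruct (dec _) eqn:Q1 in N; [discriminate|]. destruct (dec _) eqn:Q2 in N'; [discriminate|].
      apply decF in Q1, Q2.
      assert (fst p' <= fst p) by (apply Rnot_lt_le; intro; apply Q1; exists p'; auto).
      assert (fst p <= fst p') by (apply Rnot_lt_le; intro; apply Q2; exists p; auto).
      subst l'. assert (Ex : fst p = fst p') by lra. assert (Ep : p = p'). { rewrite (pt_eq p a c Ho), (pt_eq p' a c Ho'). rewrite Ex. reflexivity. } subst p'. reflexivity. }
  lia.
Qed.

Open Scope R_scope.

Lemma ST_nat P L m : NoDup P -> NoDup L -> (1 <= m)%nat ->
  (incidences P L * m ^ 2 <= (length P + length L) * m ^ 2 + 4 * length P * m ^ 3 + length L * length L)%nat.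
Proof.
  intros NP NL Hm.
  pose proof (inc_bound P L NP NL) as H1.
  pose proof (amp P (EsOf P L) m (EsOf_good P L NP NL) Hm) as H2.
  pose proof (cr_bound P L NP NL) as H3.
  assert (H4 : (length (filter isNV L) <= length L)%nat) by apply filter_length_le.
  assert (H5 : (length (filter isNV L) * length (filter isNV L) <= length L * length L)%nat) by nia.
  nia.
Qed.

Lemma ST_real P L (k : nat) : NoDup P -> NoDup L -> (1 <= k)%nat ->
  INR (incidences P L) <= INR (length P) + INR (length L) + 4 * INR (length P) * INR k +
     INR (length L) ^ 2 / INR k ^ 2.
Proof.
  intros NP NL Hk.
  pose proof (ST_nat P L k NP NL Hk) as H. apply le_INR in H.
  rewrite !plus_INR, !mult_INR, !pow_INR, ?plus_INR in H. simpl (INR 4) in H.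
  assert (Hk' : 1 <= INR k) by (apply (le_INR 1); auto).
  assert (Hk2 : 0 < INR k ^ 2) by (apply pow_lt; lra).
  apply (Rmult_le_reg_r (INR k ^ 2)); auto.
  replace ((INR (length P) + INR (length L) + 4 * INR (length P) * INR k +
     INR (length L) ^ 2 / INR k ^ 2) * INR k ^ 2) with
    ((INR (length P) + INR (length L)) * INR k ^ 2 + (1 + 1 + 1 + 1) * INR (length P) * INR k ^ 3 +
     INR (length L) * INR (length L)) by (field; lra).
  lra.
Qed.

Lemma exists_nat t : 1 <= t -> exists k : nat, (1 <= k)%nat /\ t <= INR k <= t + 1.
Proof.
  intros Ht. destruct (archimed t) as [H1 H2].
  assert (Hz : (0 < up t)%Z) by (apply lt_IZR; simpl; lra).
  exists (Z.to_nat (up t)). rewrite INR_IZR_INZ, Z2Nat.id by lia. split.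
  - lia.
  - lra.
Qed.

Lemma ln_le' x y : 0 < x -> x <= y -> ln x <= ln y.
Proof. intros Hx Hxy. destruct Hxy as [H|H]. left; apply ln_increasing; auto. subst; lra. Qed.

Lemma exp_le' a b : a <= b -> exp a <= exp b.
Proof. intros [H|H]. left; apply exp_increasing; auto. subst; lra. Qed.

Open Scope R_scope.

Theorem proposition2p9 (alpha beta A B : R) :
  alpha + 2 * beta = 1 -> beta <= 2 / 3 -> 0 < A -> 0 < B ->
  exists C1 c : R, 0 < C1 /\ 0 < c /\
    forall (m n : nat), (0 < m)%nat -> (0 < n)%nat ->
      INR m <= INR n ^ 2 / C1 -> INR n <= INR m ^ 2 / C1 ->
      forall (P : list point) (L : list line),
        NoDup P -> NoDup L ->
        INR (length L) <= A * Rpower (INR m) alpha * Rpower (INR n) beta ->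
        INR (incidences P L) >=
          B * Rpower (INR m) (alpha - 1 / 3) * Rpower (INR n) (beta + 2 / 3) ->
        INR (length P) >=
          c * Rpower (INR m) (alpha / 2 - 1 / 2) * Rpower (INR n) (beta / 2 + 1).
Proof.
  intros Hab Hb HA HB.
  set (K0 := ln (8 * A / B + 1)).
  assert (HAB : 0 < 8 * A / B) by (apply Rdiv_lt_0_compat; lra).
  assert (HK0 : 0 < K0).
  { unfold K0. rewrite <- ln_1. apply ln_increasing; lra. }
  set (theta := 1 + 8 * A ^ 2 / B).
  assert (Hth0 : 0 <= 8 * A ^ 2 / B) by (apply Rlt_le, Rdiv_lt_0_compat; nra).
  assert (Hth : 1 <= theta) by (unfold theta; lra).
  exists (exp (3 * K0)), (B / (64 * theta)).
  split; [apply exp_pos|]. split; [apply Rdiv_lt_0_compat; lra|].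
  intros m n Hm Hn H1 H2 P L NP NL HL HI.
  set (X := INR m) in *. set (Y := INR n) in *.
  assert (HX : 1 <= X) by (apply (le_INR 1); lia).
  assert (HY : 1 <= Y) by (apply (le_INR 1); lia).
  set (lx := ln X). set (ly := ln Y).
  assert (Hl1 : lx + 3 * K0 <= 2 * ly).
  { assert (X * exp (3 * K0) <= Y * Y).
    { apply (Rmult_le_compat_r (exp (3 * K0))) in H1; [|left; apply exp_pos].
      replace (Y ^ 2 / exp (3 * K0) * exp (3 * K0)) with (Y * Y) in H1 by (field; apply Rgt_not_eq, exp_pos).
      auto. }
    apply ln_le' in H. rewrite !ln_mult, ln_exp in H; try lra; try apply exp_pos. unfold lx, ly; lra.
    apply Rmult_lt_0_compat; [lra|apply exp_pos]. }
  assert (Hl2 : ly + 3 * K0 <= 2 * lx).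
  { assert (Y * exp (3 * K0) <= X * X).
    { apply (Rmult_le_compat_r (exp (3 * K0))) in H2; [|left; apply exp_pos].
      replace (X ^ 2 / exp (3 * K0) * exp (3 * K0)) with (X * X) in H2 by (field; apply Rgt_not_eq, exp_pos).
      auto. }
    apply ln_le' in H. rewrite !ln_mult, ln_exp in H; try lra; try apply exp_pos. unfold lx, ly; lra.
    apply Rmult_lt_0_compat; [lra|apply exp_pos]. }
  unfold Rpower in *. fold lx ly in HL, HI |- *.
  rewrite Rmult_assoc, <- exp_plus in HL, HI |- *.
  set (eJ := (alpha - 1 / 3) * lx + (beta + 2 / 3) * ly) in *.
  set (eM := (alpha / 2 - 1 / 2) * lx + (beta / 2 + 1) * ly) in *.
  set (eL := alpha * lx + beta * ly) in *.
  set (J := exp eJ) in *. set (M := exp eM) in *. set (Lam := exp eL) in *.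
  assert (HJ : 0 < J) by apply exp_pos. assert (HM : 0 < M) by apply exp_pos.
  assert (HLam : 0 < Lam) by apply exp_pos.
  assert (F1 : M <= J).
  { apply exp_le'. assert (alpha = 1 - 2 * beta) by lra.
    assert (eJ - eM = (2 / 3 - beta) * (lx - ly / 2)). { unfold eJ, eM. rewrite H. field. }
    assert (0 <= (2 / 3 - beta) * (lx - ly / 2)) by (apply Rmult_le_pos; lra). lra. }
  assert (F2 : A * Lam <= B / 8 * J).
  { assert (Lam <= exp (- K0) * J).
    { unfold Lam, J. rewrite <- exp_plus. apply exp_le'. unfold eL, eJ. lra. }
    assert (exp (- K0) * A <= B / 8).
    { rewrite exp_Ropp. unfold K0. rewrite exp_ln by lra.
      apply (Rmult_le_reg_r (8 * A / B + 1)); [lra|].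
      replace (/ (8 * A / B + 1) * A * (8 * A / B + 1)) with A by (field; split; lra).
      replace (B / 8 * (8 * A / B + 1)) with (A + B / 8) by (field; lra). lra. }
    nra. }
  assert (F3 : Lam * Lam * (M * M) = J * J * J).
  { unfold Lam, M, J. rewrite <- !exp_plus. f_equal. unfold eL, eM, eJ. field. }
  set (c := B / (64 * theta)) in *.
  assert (Hc0 : 0 < c) by (unfold c; apply Rdiv_lt_0_compat; lra).
  assert (Hct : c * theta = B / 64) by (unfold c; field; lra).
  apply Rnot_lt_ge. intro Hc.
  set (t := theta * J / M).
  assert (HtM : t * M = theta * J) by (unfold t; field; lra).
  assert (Ht1 : 1 <= t) by nra.
  destruct (exists_nat t Ht1) as [k [Hk1 [Hk2 Hk3]]].
  pose proof (ST_real P L k NP NL Hk1) as ST.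
  set (Pn := INR (length P)) in *. set (Ln := INR (length L)) in *.
  set (I := INR (incidences P L)) in *. set (K := INR k) in *.
  assert (HPn : 0 <= Pn) by apply pos_INR. assert (HLn : 0 <= Ln) by apply pos_INR.
  assert (B1 : Pn <= c * J) by nra.
  assert (B2 : Ln <= B / 8 * J) by lra.
  assert (B3 : 4 * Pn * K <= 8 * c * theta * J).
  { assert (Pn * K <= c * M * (2 * t)) by nra. nra. }
  assert (E2 : t ^ 2 * (A ^ 2 * J / theta ^ 2) = A ^ 2 * (J * J * J) / (M * M)) by (unfold t; field; lra).
  assert (E3 : A ^ 2 * (J * J * J) / (M * M) = (A * Lam) ^ 2) by (rewrite <- F3; field; lra).
  assert (B4 : Ln ^ 2 / K ^ 2 <= B / 8 * J).
  { assert (Hq : 0 <= A ^ 2 * J / theta ^ 2).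
    { apply Rmult_le_pos. nra. apply Rlt_le, Rinv_0_lt_compat. nra. }
    assert (Ln ^ 2 <= K ^ 2 * (A ^ 2 * J / theta ^ 2)).
    { assert (Ln ^ 2 <= (A * Lam) ^ 2) by nra.
      assert (t ^ 2 <= K ^ 2) by nra. nra. }
    assert (Ln ^ 2 / K ^ 2 <= A ^ 2 * J / theta ^ 2).
    { apply (Rmult_le_reg_r (K ^ 2)). nra.
      replace (Ln ^ 2 / K ^ 2 * K ^ 2) with (Ln ^ 2) by (field; lra). nra. }
    assert (A ^ 2 / theta ^ 2 <= B / 8).
    { apply (Rmult_le_reg_r (theta ^ 2)). nra.
      replace (A ^ 2 / theta ^ 2 * theta ^ 2) with (A ^ 2) by (field; lra).
      assert (8 * A ^ 2 / B * B = 8 * A ^ 2) by (field; lra).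
      assert (theta <= theta ^ 2) by nra.
      assert (A ^ 2 <= B / 8 * theta) by (unfold theta; nra). nra. }
    replace (A ^ 2 * J / theta ^ 2) with (A ^ 2 / theta ^ 2 * J) in H0 by (field; lra). nra. }
  assert (c <= B / 64) by nra.
  nra.
Qed.
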